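(* Let $N$ be a positive integer power of two and $j=\sqrt{-1}$. Let $\mathbf{\Phi}$ be the $N\times N$ discrete Fresnel transform matrix with entries (indices $m,n=0,\dots,N-1$) $$[\mathbf{\Phi}]_{m,n}=\frac{1}{\sqrt{N}}\,e^{-j\frac{\pi}{4}}\,e^{j\frac{\pi}{N}(n-m)^2},$$ let $\mathbf{\Delta}=\mathrm{diag}\left(e^{j\frac{2\pi}{N}\cdot 0},e^{j\frac{2\pi}{N}\cdot 1},\dots,e^{j\frac{2\pi}{N}(N-1)}\right)$, and let $\mathbf{\Pi}$ be the $N\times N$ cyclic permutation matrix with $[\mathbf{\Pi}]_{m,n}=1$ if $m\equiv n+1\pmod N$ and $0$ otherwise. Then for every integer $k$, $$\mathbf{\Phi}\mathbf{\Delta}^k\mathbf{\Phi}^H=e^{j\frac{\pi}{N}k^2}\,\mathbf{\Pi}^k\mathbf{\Delta}^k .$$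
   Context: $\mathbf{\Phi}^H$ denotes the conjugate transpose of $\mathbf{\Phi}$; $\mathbf{\Phi}$ is unitary ($\mathbf{\Phi}^H\mathbf{\Phi}=\mathbf{I}_N$). Negative powers denote powers of the inverse matrix. Equivalently, $\mathbf{\Phi}=\mathbf{\Theta}_2\mathbf{F}\mathbf{\Theta}_1$ where $\mathbf{F}$ is the unitary DFT matrix $[\mathbf{F}]_{m,n}=\frac{1}{\sqrt N}e^{-j2\pi mn/N}$, $\mathbf{\Theta}_1=\mathrm{diag}(e^{-j\pi/4}e^{j\pi m^2/N})_m$, $\mathbf{\Theta}_2=\mathrm{diag}(e^{j\pi m^2/N})_m$. *)

(* Defs.v *)
From HB Require Import structures.
From mathcomp Require Import all_boot all_order all_algebra.
From mathcomp Require Import all_classical all_reals.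
From mathcomp Require Import trigo.
From mathcomp Require Import complex.
Set Implicit Arguments. Unset Strict Implicit. Unset Printing Implicit Defensive.
Import Order.TTheory GRing.Theory Num.Theory.
Local Open Scope ring_scope.
Local Open Scope complex_scope.

Definition cexpj (R : realType) (x : R) : R[i] := cos x +i* sin x.

Definition fresnel_mx (R : realType) (n : nat) : 'M[R[i]]_n.+1 :=
  \matrix_(m < n.+1, l < n.+1)
    ((Num.sqrt (n.+1)%:R : R)^-1%:C * cexpj (- (pi / 4%:R))
     * cexpj (pi / (n.+1)%:R * ((l%:Z - m%:Z) ^+ 2)%:~R)).

Definition Delta_mx (R : realType) (n : nat) : 'M[R[i]]_n.+1 :=
  diag_mx (\row_(m < n.+1) cexpj (2%:R * pi / (n.+1)%:R * m%:R)).

Definition Pi_mx (R : realType) (n : nat) : 'M[R[i]]_n.+1 :=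
  \matrix_(m < n.+1, l < n.+1) (if (m : nat) == (l.+1 %% n.+1)%N then 1 else 0).

Definition adjmx (R : realType) (m l : nat) (A : 'M[R[i]]_(m, l)) : 'M[R[i]]_(l, m) :=
  (map_mx (fun z => z^*) A)^T.

(* Main.v *)
Require Import Defs.
From HB Require Import structures.
From mathcomp Require Import all_boot all_order all_algebra.
From mathcomp Require Import all_classical all_reals.
From mathcomp Require Import trigo.
From mathcomp Require Import complex.
From mathcomp Require Import ring lra.
Import Order.TTheory GRing.Theory Num.Theory.
Local Open Scope ring_scope.
Local Open Scope complex_scope.
Section S.
Variable R : realType.
Local Notation e := (@cexpj R).
Lemma eD (x y : R) : e (x + y) = e x * e y.
Proof. rewrite /cexpj sinD cosD; simpc. congr (_ +i* _); ring. Qed.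
Lemma e0 : e 0 = 1.
Proof. by rewrite /cexpj sin0 cos0. Qed.
Lemma eJ (x : R) : (e x)^* = e (- x).
Proof. by rewrite /cexpj sinN cosN. Qed.
Lemma eMn (x : R) (l : nat) : e (x *+ l) = e x ^+ l.
Proof. elim: l => [|l IH]; first by rewrite mulr0n e0. by rewrite mulrSr eD IH exprSr. Qed.
Lemma eMnat (x : R) (l : nat) : e (x * l%:R) = e x ^+ l.
Proof. by rewrite mulr_natr eMn. Qed.
Lemma e2pi : e (pi *+ 2) = 1.
Proof. by rewrite /cexpj cos2pi sin2pi. Qed.
Lemma eN (x : R) : e (- x) * e x = 1.
Proof. by rewrite -eD addNr e0. Qed.
Lemma e2pin (l : nat) : e (2%:R * pi * l%:R) = 1.
Proof. by rewrite eMnat mulr_natl e2pi expr1n. Qed.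
Lemma e2piz (z : int) : e (2%:R * pi * z%:~R) = 1.
Proof.
case: z => l; first exact: e2pin.
rewrite NegzE mulrNz mulrN.
by rewrite -[RHS](eN (2%:R * pi * l.+1%:R)) e2pin mulr1.
Qed.
Lemma natzR (N : nat) : (N%:Z)%:~R = N%:R :> R.
Proof. by []. Qed.

Lemma e_ne1 (N : nat) (d : int) : (0 < N)%N -> ~~ (N%:Z %| d)%Z ->
  e (2%:R * pi / N%:R * d%:~R) != 1.
Proof.
move=> N0 nd.
have NR0 : (0 : R) < N%:R by rewrite ltr0n.
set d' := (d %% N)%Z.
have hd : d = ((d %/ N)%Z * N + d')%R by rewrite [LHS](divz_eq d N).
have hx : 2%:R * pi / N%:R * d%:~R = 2%:R * pi / N%:R * d'%:~R + 2%:R * pi * (d %/ N)%Z%:~R :> R.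
  rewrite {1}hd intrD intrM natzR; field; by rewrite lt0r_neq0.
rewrite hx eD e2piz mulr1.
have d'ge0 : (0 <= d')%R by apply: modz_ge0; rewrite eqz_nat -lt0n.
have d'ne0 : d' != 0 by apply/eqP => /dvdz_mod0P; rewrite (negbTE nd).
have d'lt : (d' < N%:Z)%R by apply: ltz_pmod; rewrite ltz_nat.
have D0 : (0 : R) < d'%:~R by rewrite ltr0z lt0r d'ne0.
have DN : (d'%:~R : R) < N%:R by rewrite -natzR ltr_int.
set D := (d'%:~R : R) in D0 DN *.
set y := pi / N%:R * D.
have yN : y * N%:R = pi * D by rewrite /y; field; rewrite lt0r_neq0.
have pi0 := @pi_gt0 R.
have y0 : 0 < y by rewrite /y mulr_gt0 // divr_gt0.
have ypi : y < pi by nra.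
have sy : 0 < sin y by apply: sin_gt0_pi; rewrite y0 ypi.
have -> : 2%:R * pi / N%:R * D = y *+ 2 by rewrite /y mulr2n; ring.
apply/negP => /eqP /(congr1 (@complex.Re R)) /=.
rewrite cos_mulr2n => hc.
have := sin2cos2 y.
nra.
Qed.

Lemma gsum (N : nat) (d : int) : (0 < N)%N ->
  \sum_(l < N) e (2%:R * pi / N%:R * d%:~R * l%:R) = if (N%:Z %| d)%Z then N%:R else 0.
Proof.
move=> N0.
have NR0 : (0 : R) < N%:R by rewrite ltr0n.
under eq_bigr do rewrite eMnat.
case: ifPn => hd.
  case/dvdzP: hd => q ->.
  have -> : 2%:R * pi / N%:R * (q * N)%:~R = 2%:R * pi * q%:~R :> R.
    rewrite intrM natzR; field; by rewrite lt0r_neq0.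
  by rewrite e2piz (eq_bigr (fun _ => 1)) ?sumr_const ?card_ord // => i _; rewrite expr1n.
have hz := @e_ne1 N d N0 hd.
have hN : e (2%:R * pi / N%:R * d%:~R) ^+ N = 1.
  rewrite -eMnat.
  have -> : 2%:R * pi / N%:R * d%:~R * N%:R = 2%:R * pi * d%:~R :> R.
    field; by rewrite lt0r_neq0.
  exact: e2piz.
have := subrX1 (e (2%:R * pi / N%:R * d%:~R)) N.
rewrite hN subrr => /esym /eqP; rewrite mulf_eq0 subr_eq0 (negbTE hz) /=.
by move/eqP.
Qed.

Lemma hom_exprz (n : nat) (f : int -> 'M[R[i]]_n.+1) (X : 'M[R[i]]_n.+1) :
  f 0 = 1 -> (forall k, f (k + 1) = f k * X) -> forall k, f k = X ^ k.
Proof.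
move=> f0 fS.
have Hn : forall j (m : nat), f j * X ^+ m = f (j + m%:Z).
  move=> j; elim=> [|m IH]; first by rewrite expr0 mulr1 addr0.
  by rewrite exprSr mulrA IH -fS intS [1 + _]addrC addrA.
case=> m.
  by rewrite -exprnP; have := Hn 0 m; rewrite f0 mul1r add0r => <-.
have H1 : f (Negz m) * X ^+ m.+1 = 1 by rewrite Hn NegzE addNr f0.
have H2 : X ^+ m.+1 * f (Negz m) = 1.
  move: H1; rewrite -!mulmxE /GRing.one /=; exact: mulmx1C.
have uX : X ^+ m.+1 \is a GRing.unit by apply/unitrP; exists (f (Negz m)).
rewrite -[X ^ Negz m]/((X ^+ m.+1)^-1).
by rewrite -[LHS]mulr1 -(divrr uX) mulrA H1 mul1r.
Qed.

Definition Dk (n : nat) (k : int) : 'M[R[i]]_n.+1 :=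
  diag_mx (\row_(m < n.+1) e (2%:R * pi / (n.+1)%:R * m%:R * k%:~R)).

Lemma Dk0 n : Dk n 0 = 1.
Proof.
apply/matrixP => i j; rewrite !mxE mulr0 e0.
by case: (i == j).
Qed.

Lemma DkS n k : Dk n (k + 1) = Dk n k * Delta_mx R n.
Proof.
rewrite /Dk /Delta_mx -mulmxE mulmx_diag; congr diag_mx; apply/rowP => j.
by rewrite !mxE -eD intrD mulrDr mulr1.
Qed.

Lemma DkE n k : Dk n k = Delta_mx R n ^ k.
Proof. exact: (@hom_exprz n (Dk n) _ (Dk0 n) (DkS n)). Qed.

Definition Pk (n : nat) (k : int) : 'M[R[i]]_n.+1 :=
  \matrix_(m < n.+1, l < n.+1) (if ((n.+1)%:Z %| m%:Z - l%:Z - k)%Z then 1 else 0).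

Lemma dvd_small (N a b : nat) : (a < N)%N -> (b < N)%N ->
  (N%:Z %| a%:Z - b%:Z)%Z = (a == b).
Proof.
move=> aN bN; rewrite -eqz_mod_dvd !modz_nat eqz_nat !modn_small //.
Qed.

Lemma Pk0 n : Pk n 0 = 1.
Proof.
apply/matrixP => i j; rewrite !mxE subr0 dvd_small //.
by rewrite val_eqE; case: (i == j).
Qed.

Lemma PkS n k : Pk n (k + 1) = Pk n k * Pi_mx R n.
Proof.
apply/matrixP => i j; rewrite -mulmxE !mxE.
have jlt : (j.+1 %% n.+1 < n.+1)%N by rewrite ltn_pmod.
pose l0 : 'I_n.+1 := Ordinal jlt.
rewrite (bigD1 l0) //= big1 ?addr0; last first.
  move=> l /negbTE hl; rewrite !mxE.
  have -> : ((l : nat) == (j.+1 %% n.+1)%N) = false.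
    by apply/negbTE/eqP => h; move: hl; rewrite -val_eqE /= h eqxx.
  by rewrite mulr0.
rewrite !mxE eqxx mulr1.
have hq : (j.+1 = (j.+1 %/ n.+1) * n.+1 + j.+1 %% n.+1)%N by rewrite -divn_eq.
have -> : (i%:Z - j%:Z - (k + 1) = (i%:Z - (j.+1 %% n.+1)%N%:Z - k) - ((j.+1 %/ n.+1)%N%:Z * (n.+1)%:Z))%R.
  have : (j.+1%:Z = (j.+1 %/ n.+1)%N%:Z * (n.+1)%:Z + (j.+1 %% n.+1)%N%:Z)%R.
    by rewrite -PoszM -PoszD -hq.
  rewrite intS => h.
  have h' : (j%:Z = (j.+1 %/ n.+1)%N%:Z * (n.+1)%:Z + (j.+1 %% n.+1)%N%:Z - 1)%R.
    by rewrite -h addrAC subrr add0r.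
  rewrite h'; ring.
rewrite rpredBr //; exact: dvdz_mull.
Qed.

Lemma PkE n k : Pk n k = Pi_mx R n ^ k.
Proof. exact: (@hom_exprz n (Pk n) _ (Pk0 n) (PkS n)). Qed.

Lemma cjF (a b c : R) : conjc (a%:C * e b * e c) = a%:C * e (- b) * e (- c).
Proof.
rewrite /cexpj !sinN !cosN; apply/eqP; rewrite eq_complex /=; apply/andP; split; apply/eqP; ring.
Qed.

Lemma comb (u : R[i]) c1 a b a2 M Q : a + b - a2 = M + Q ->
  u * e c1 * e a * e b * (u * e (- c1) * e (- a2)) = u * u * e M * e Q.
Proof.
move=> h; rewrite mulrA -[u * u * e M * e Q]mulrA -eD -h !eD.
transitivity (u * u * (e (- c1) * e c1) * (e a * e b * e (- a2))); first ring.
by rewrite eN mulr1.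
Qed.

Lemma realid (Nr N'r T Rr K M : R) : Nr = 2%:R * N'r -> N'r != 0 -> M = T * Nr + Rr + K ->
  pi / Nr * (M ^+ 2 - Rr ^+ 2) =
  pi / Nr * K ^+ 2 + 2%:R * pi / Nr * Rr * K + 2%:R * pi * (T * (N'r * T + Rr + K)).
Proof.
move=> -> hN' ->; field.
by [].
Qed.
End S.

Theorem lemma2 (R : realType) (n p : nat) (hp : (0 < p)%N) (hN : n.+1 = (2 ^ p)%N)
  (k : int) :
  fresnel_mx R n * (Delta_mx R n) ^ k * adjmx (fresnel_mx R n)
  = cexpj (pi / (n.+1)%:R * (k ^+ 2)%:~R) *: ((Pi_mx R n) ^ k * (Delta_mx R n) ^ k).
Proof.
rewrite -(DkE R) -(PkE R).
have NR0 : (0 : R) < (n.+1)%:R by rewrite ltr0n.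
apply/matrixP => m r.
set s := (Num.sqrt (n.+1)%:R : R)^-1.
have L : (fresnel_mx R n * Dk R n k * adjmx (fresnel_mx R n)) m r =
  (s * s)%:C * cexpj (pi / (n.+1)%:R * ((m%:R : R) ^+ 2 - (r%:R) ^+ 2)) *
  \sum_(l < n.+1) cexpj (2%:R * pi / (n.+1)%:R * (k + r%:Z - m%:Z)%:~R * l%:R).
  rewrite -!mulmxE mul_mx_diag mxE mulr_sumr; apply: eq_bigr => l _.
  rewrite !mxE cjF [(s * s)%:C]rmorphM /s.
  apply: comb.
  rewrite !rmorphXn /= !intrB !intrD /= !natzR; ring.
rewrite L gsum // mxE -mulmxE mul_mx_diag !mxE.
have -> : (k + r%:Z - m%:Z = -(m%:Z - r%:Z - k))%R by ring.
rewrite rpredN.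
case: ifP => hd; last by rewrite mulr0 mul0r mulr0.
rewrite mul1r mulrAC.
have -> : (s * s)%:C * (n.+1)%:R = 1 :> R[i].
  rewrite -[(n.+1)%:R : R[i]](rmorph_nat (real_complex R)) -rmorphM.
  rewrite /s -expr2 exprVn sqr_sqrtr ?ler0n // mulVf ?lt0r_neq0 //.
rewrite mul1r.
case/dvdzP: hd => t ht.
have hN2 : n.+1 = (2 * 2 ^ p.-1)%N by rewrite hN -expnS prednK.
have hm : (m%:R : R) = t%:~R * (n.+1)%:R + r%:R + k%:~R.
  have := congr1 (fun z : int => (z%:~R : R)) ht => /=.
  rewrite !intrB intrM !natzR => h.
  by rewrite -h; ring.
rewrite (@realid R _ (2 ^ p.-1)%:R _ _ _ _ _ _ hm); first last.
- by rewrite pnatr_eq0 expn_eq0.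
- by rewrite hN2 natrM.
have -> : (t%:~R * ((2 ^ p.-1)%:R * t%:~R + r%:R + k%:~R) : R) =
    (t * ((2 ^ p.-1)%:Z * t + r%:Z + k))%:~R.
  by rewrite intrM !intrD intrM !natzR.
by rewrite !eD e2piz mulr1 rmorphXn.
Qed.
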